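(* Fix a contact vector $\mathsf V\in\mathbb Z^n$ and a stable weighted dual graph $\mathsf G$ of genus $g$ with $n$ legs, with moduli cone $\sigma_{\mathsf G}=\mathbb R_{\ge0}^{E(\mathsf G)}$. Then the closure of the set of points of $\sigma_{\mathsf G}$ that lie in $\mathsf{DR}_g(\mathsf V)^{\mathrm{trop}}_{\#}$ and have a fixed rubber combinatorial type is a simplicial cone.
   Context: A point $p$ in the interior of $\sigma_{\mathsf G}$ gives a tropical curve $\Gamma_p$ (metric realization of $\mathsf G$ with edge lengths from $p$ and infinite legs). A balanced function with slopes $\mathsf V$ on it is a continuous function to $\mathbb R$, linear with integer slope on edges, with outgoing slopes summing to $0$ at every vertex, and slope $\mathsf V_j$ along leg $j$; it is unique up to additive constant if it exists. $\mathsf{DR}_g(\mathsf V)^{\mathrm{trop}}_{\#}\subset\mathcal M^{\mathrm{trop}}_{g,n}$ is the closure of the locus of tropical curves admitting such a function. For such $p$ and function $F$: the target graph $T$ is the subdivision of $\mathbb R$ with vertices at images of vertices of $\Gamma_p$; the semistable source graph $\Gamma$ is obtained by subdividing $\Gamma_p$ at preimages of the vertices of $T$ (new vertices of genus $0$); the rubber combinatorial type is the data of $\Gamma$, $T$, the graph map $\Gamma\to T$, and the slopes on edges and legs of $\Gamma$. *)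

(* Defs.v *)
From HB Require Import structures.
From mathcomp Require Import all_boot all_order all_algebra.
From mathcomp Require Import all_classical all_reals all_analysis.
Set Implicit Arguments. Unset Strict Implicit. Unset Printing Implicit Defensive.
Import Order.TTheory GRing.Theory Num.Theory.
Import numFieldNormedType.Exports.
Local Open Scope ring_scope.
Local Open Scope classical_set_scope.

(* A weighted dual graph G with n legs:
   - vertices: a finite type V, with genus weights gw : V -> nat;
   - edges: labelled by 'I_m (so sigma_G = R_{>=0}^{E(G)} sits in 'rV[R]_m);
     edge e goes from [src e] to [tgt e] (an arbitrary fixed orientation;
     loops allowed when src e = tgt e);
   - legs: 'I_n, leg j attached at vertex [leg j]. *)

Section Graphs.
Variables (V : finType) (m n : nat).
Variables (src tgt : 'I_m -> V) (leg : 'I_n -> V).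

Definition valence (v : V) : nat :=
  (#|[set e | src e == v]| + #|[set e | tgt e == v]| + #|[set j | leg j == v]|)%N.

Definition adjacent : rel V :=
  fun u w => [exists e, ((src e == u) && (tgt e == w)) || ((src e == w) && (tgt e == u))].

(* stable weighted dual graph of genus g with n legs:
   nonempty, connected, 2 g(v) - 2 + val(v) > 0 at every vertex,
   and g = b_1(G) + sum_v g(v) = |E| - |V| + 1 + sum_v g(v). *)
Definition stable_graph (g : nat) (gw : V -> nat) : Prop :=
  [/\ (0 < #|V|)%N,
      (forall u w, connect adjacent u w),
      (forall v, 2 < 2 * gw v + valence v)%N
    & (g + #|V| = m + 1 + \sum_(v : V) gw v)%N].

Variable R : realType.

Definition interior_pt (p : 'rV[R]_m) : Prop := forall e, 0 < p 0 e.

(* A balanced function with slopes Vc on the tropical curve Gamma_p.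
   Such a function (continuous, linear with integer slope on each edge and
   leg) is encoded by its values F on the vertices and its integer slopes s
   on the edges (slope along e oriented src e -> tgt e); on leg j it is
   F(leg j) + Vc j * t. *)
Definition balanced (Vc : 'I_n -> int) (p : 'rV[R]_m) (F : V -> R) (s : 'I_m -> int) : Prop :=
  (forall e, F (tgt e) - F (src e) = (s e)%:~R * p 0 e) /\
  (forall v, (\sum_(e | src e == v) s e) - (\sum_(e | tgt e == v) s e)
             + (\sum_(j | leg j == v) Vc j) = 0).

(* Level of a vertex: index of the vertex F(v) of the target graph T
   (vertices of T = images of vertices of Gamma_p, ordered along R). *)
Definition level (F : V -> R) (v : V) : nat :=
  size (undup [seq F w | w <- enum V & F w < F v]).

(* Rubber combinatorial type, relative to the fixed labelling of G.
   The data (Gamma, T, Gamma -> T, slopes) are determined by, and determine,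
   the pair (level function on V(G), slope on each edge of G): T has vertices
   0 < 1 < ... < max level, Gamma subdivides edge e at the levels strictly
   between the levels of its endpoints, and each piece of e has slope s e. *)
Definition rubber_type := ((V -> nat) * ('I_m -> int))%type.

(* p lies in the interior of sigma_G, Gamma_p admits a balanced function with
   slopes Vc (i.e. p is in DR_g(Vc)^trop_#), and its rubber type is tau. *)
Definition DR_type_locus (Vc : 'I_n -> int) (tau : rubber_type) : set 'rV[R]_m :=
  [set p | interior_pt p /\
     exists F s, balanced Vc p F s /\
       (forall v, level F v = tau.1 v) /\ (forall e, s e = tau.2 e)].

End Graphs.

Definition simplicial_cone (R : realType) (m : nat) (S : set 'rV[R]_m) : Prop :=
  exists (k : nat) (M : 'M[R]_(k, m)), row_free M /\
    S = [set x | exists lam : 'rV[R]_k, (forall i, 0 <= lam 0 i) /\ x = lam *m M].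

(* Main.v *)
Require Import Defs.
From HB Require Import structures.
From mathcomp Require Import all_boot all_order all_algebra.
From mathcomp Require Import all_classical all_reals all_analysis.
From mathcomp Require Import lra.
Import Order.TTheory GRing.Theory Num.Theory.
Import numFieldNormedType.Exports.
Local Open Scope ring_scope.
Local Open Scope classical_set_scope.
Set Implicit Arguments. Unset Strict Implicit. Unset Printing Implicit Defensive.

Lemma mem_levS (V : finType) (R : realType) (F : V -> R) c y :
  (y \in undup [seq F x | x <- enum V & F x < c]) <-> exists x, F x < c /\ y = F x.
Proof.
rewrite mem_undup; split.
  by case/mapP => x; rewrite mem_filter => /andP [h _] ->; exists x.
by case=> x [h ->]; apply: map_f; rewrite mem_filter h mem_enum.
Qed.

Lemma level_lt (V : finType) (R : realType) (F : V -> R) u w :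
  F u < F w -> (level F u < level F w)%N.
Proof.
move=> uw; rewrite /level.
have U : uniq (F u :: undup [seq F x | x <- enum V & F x < F u]).
  rewrite /= undup_uniq andbT; apply/negP => /mem_levS [x [h e]].
  by move: h; rewrite -e ltxx.
apply: (leq_trans _ (uniq_leq_size U _)) => // y; rewrite inE => /orP [/eqP ->|].
  by apply/mem_levS; exists u.
by move/mem_levS => [x [h ->]]; apply/mem_levS; exists x; split => //; apply: lt_trans uw.
Qed.

Lemma level_eq (V : finType) (R : realType) (F : V -> R) u w :
  F u = F w -> level F u = level F w.
Proof. by move=> e; rewrite /level e. Qed.

Lemma level_ltP (V : finType) (R : realType) (F : V -> R) u w :
  (F u < F w) = (level F u < level F w)%N.
Proof.
case: (ltgtP (F u) (F w)) => h.
- by rewrite level_lt.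
- by apply/esym/negbTE; rewrite -leqNgt ltnW // level_lt.
- by rewrite (level_eq h) ltnn.
Qed.

Lemma level_eqP (V : finType) (R : realType) (F : V -> R) u w :
  (F u == F w) = (level F u == level F w).
Proof.
apply/eqP/eqP => [h|h]; first exact: level_eq.
by case: (ltgtP (F u) (F w)) => h' //; move: (level_lt h'); rewrite h ltnn.
Qed.

Lemma size_undup_map (T A B : eqType) (f : T -> A) (g : T -> B) s :
  (forall x y, (f x == f y) = (g x == g y)) ->
  size (undup (map f s)) = size (undup (map g s)).
Proof.
move=> H; elim: s => //= x s IH.
have -> : (f x \in map f s) = (g x \in map g s).
  apply/mapP/mapP => [[y ys /eqP e]|[y ys /eqP e]]; exists y => //; apply/eqP.
    by rewrite -H. by rewrite H.
by case: ifP => _ //=; rewrite IH.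
Qed.

Lemma level_equiv (V : finType) (R : realType) (F G : V -> R) :
  (forall u w, (F u < F w) = (G u < G w)) -> forall v, level F v = level G v.
Proof.
move=> H v; rewrite /level.
rewrite (@eq_filter _ (fun x => F x < F v) (fun x => G x < G v)); last by move=> x; rewrite H.
apply: size_undup_map => x y.
by rewrite !eq_le !leNgt !H.
Qed.

Lemma level_pred (V : finType) (R : realType) (F : V -> R) w :
  (0 < level F w)%N -> exists u, level F u = (level F w).-1.
Proof.
move=> H.
have [x0 h0] : exists x0, F x0 < F w.
  move: H; rewrite /level; case E: (undup _) => [|y s] //= _.
  have : y \in undup [seq F x | x <- enum V & F x < F w] by rewrite E inE eqxx.
  by case/mem_levS => x [h _]; exists x.
case: (@arg_maxP _ _ V x0 (fun x => F x < F w) F h0) => u hu umax.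
exists u.
have P : perm_eq (undup [seq F x | x <- enum V & F x < F w])
                 (F u :: undup [seq F x | x <- enum V & F x < F u]).
  apply: uniq_perm; first exact: undup_uniq.
    rewrite /= undup_uniq andbT; apply/negP => /mem_levS [x [h e]].
    by move: h; rewrite -e ltxx.
  move=> y'; apply/idP/idP.
    case/mem_levS => x [hx ->]; rewrite inE.
    have hle : F x <= F u := umax x hx.
    move: hle; rewrite le_eqVlt => /orP [/eqP ->|lt]; first by rewrite eqxx.
    by apply/orP; right; apply/mem_levS; exists x.
  rewrite inE => /orP [/eqP ->|]; first by apply/mem_levS; exists u.
  by case/mem_levS => x [hx ->]; apply/mem_levS; exists x; split => //; apply: lt_trans hu.
by rewrite /level (perm_size P).
Qed.

Lemma level_down (V : finType) (R : realType) (F : V -> R) w j :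
  (j <= level F w)%N -> exists u, level F u = j.
Proof.
move=> h; have [d] : exists d, level F w = (j + d)%N by exists (level F w - j)%N; rewrite subnKC.
elim: d w {h} => [|d IH] w e; first by exists w; rewrite e addn0.
have [u hu] : exists u, level F u = (level F w).-1 by apply: level_pred; rewrite e addnS.
by apply: (IH u); rewrite hu e addnS.
Qed.


Lemma cont_mulcoord (R : realType) m k (A : 'M[R]_(m,k)) i :
  continuous (fun x : 'rV[R]_m => (x *m A) 0 i).
Proof.
have -> : (fun x : 'rV[R]_m => (x *m A) 0 i) = (fun x => \sum_(j < m) x 0 j * A j i).
  by apply: funext => x; rewrite mxE.
apply: continuous_big; first exact: add_continuous.
move=> j _ x; exact: (@cvgMr_tmp R _ (nbhs x) _ (fun y : 'rV[R]_m => y 0 j) (x 0 j) (A j i) (@coord_continuous R 1 m 0 j x)).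
Qed.

Definition cone (R : realType) k m (M : 'M[R]_(k,m)) : set 'rV[R]_m :=
  [set x | exists lam : 'rV[R]_k, (forall i, 0 <= lam 0 i) /\ x = lam *m M].

Lemma closed_cone (R : realType) k m (M : 'M[R]_(k,m)) : row_free M -> closed (cone M).
Proof.
case/row_freeP => B MB.
have -> : cone M = (\bigcap_(j in [set: 'I_m]) ((fun x : 'rV[R]_m => (x *m (B *m M - 1%:M)) 0 j) @^-1` [set 0]))
   `&` (\bigcap_(i in [set: 'I_k]) ((fun x : 'rV[R]_m => (x *m B) 0 i) @^-1` [set y | 0 <= y])).
  apply/seteqP; split => x /=.
    case=> lam [lam0 ->]; split => j _ /=.
      by rewrite mulmxBr mulmx1 !mulmxA -(mulmxA lam) MB mulmx1 subrr mxE.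
    by rewrite -mulmxA MB mulmx1.
  case=> H1 H2; exists (x *m B); split; first by move=> i; exact: H2.
  have : x *m (B *m M - 1%:M) = 0 by apply/rowP => j; rewrite H1 // mxE.
  by rewrite mulmxBr mulmx1 mulmxA => /eqP; rewrite subr_eq0 => /eqP ->.
apply: closedI; apply: closed_bigI => j _; apply: preimage_closed.
- move=> x _; exact: cont_mulcoord.
- exact: closed_eq.
- move=> x _; exact: cont_mulcoord.
- exact: closed_ge.
Qed.

Lemma cone_closure (R : realType) k m (M : 'M[R]_(k,m)) (L : set 'rV[R]_m) :
  row_free M -> (forall mu : 'rV[R]_k, (forall i, 0 < mu 0 i) -> L (mu *m M)) ->
  L `<=` cone M -> closure L = cone M.
Proof.
move=> Mfree Lpos LC; apply/seteqP; split.
  rewrite [X in _ `<=` X](closure_id _).1; first exact: closureS.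
  exact: closed_cone.
move=> x [lam [lam0 ->]] B /nbhs_ballP [e e0 eB].
pose w : 'rV[R]_m := const_mx 1 *m M.
pose eps := e / (`|w| + 1).
have eps0 : 0 < eps by rewrite divr_gt0 // ltr_wpDl.
exists ((lam + eps *: const_mx 1) *m M); split.
  apply: Lpos => i; rewrite !mxE mulr1; exact: ltr_wpDl.
apply: eB; rewrite -ball_normE /= mulmxDl opprD addrA subrr sub0r normrN -scalemxAl normrZ.
rewrite gtr0_norm // /eps -/w.
have w0 : 0 < `|w| + 1 by rewrite ltr_wpDl.
rewrite mulrAC ltr_pdivrMr // ltr_pM2l // ltrDl // ltr01.
Qed.

Definition Phi (V : finType) (R : realType) K (t : V -> nat) (lam : 'rV[R]_K) (v : V) : R :=
  \sum_(i < K) lam 0 i * (nat_of_bool (i < t v)%N)%:R.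

Definition Amat (V : finType) (R : realType) m K (src tgt : 'I_m -> V) (t : V -> nat)
  (s : 'I_m -> int) : 'M[R]_(K, m) :=
  \matrix_(i < K, e < m) (if s e == 0 then 0 else
     ((nat_of_bool (i < t (tgt e))%N)%:R - (nat_of_bool (i < t (src e))%N)%:R) / (s e)%:~R).

Definition Zset m (s : 'I_m -> int) : {set 'I_m} := [set e | s e == 0].

Definition Bmat (R : realType) m (s : 'I_m -> int) : 'M[R]_(#|Zset s|, m) :=
  \matrix_(r, e) (nat_of_bool (enum_val r == e))%:R.

Lemma Acoord (V : finType) (R : realType) m K (src tgt : 'I_m -> V) t s (lam : 'rV[R]_K) e :
  (lam *m @Amat V R m K src tgt t s) 0 e =
  if s e == 0 then 0 else (Phi t lam (tgt e) - Phi t lam (src e)) / (s e)%:~R.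
Proof.
rewrite mxE; case: ifP => h.
  by apply: big1 => i _; rewrite mxE h mulr0.
rewrite /Phi -sumrB mulr_suml; apply: eq_bigr => i _.
by rewrite mxE h mulrA mulrBr.
Qed.

Lemma Bcoord_in (R : realType) m (s : 'I_m -> int) (lam : 'rV[R]_#|Zset s|) e (he : e \in Zset s) :
  (lam *m @Bmat R m s) 0 e = lam 0 (enum_rank_in he e).
Proof.
rewrite mxE (bigD1 (enum_rank_in he e)) //= mxE enum_rankK_in // eqxx mulr1.
rewrite big1 ?addr0 // => r hr; rewrite mxE.
case: eqP => [E|]; last by rewrite mulr0.
have h := enum_valK_in he r; rewrite E in h; by rewrite h eqxx in hr.
Qed.

Lemma Bcoord_out (R : realType) m (s : 'I_m -> int) (lam : 'rV[R]_#|Zset s|) e :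
  e \notin Zset s -> (lam *m @Bmat R m s) 0 e = 0.
Proof.
move=> he; rewrite mxE; apply: big1 => r _; rewrite mxE.
case: eqP => [E|]; last by rewrite mulr0.
by move: he; rewrite -E enum_valP.
Qed.

Lemma Phi_eq (V : finType) (R : realType) K t (lam : 'rV[R]_K) (x y : V) :
  t x = t y -> Phi t lam x = Phi t lam y.
Proof. by move=> h; rewrite /Phi h. Qed.

Lemma Phi_mono (V : finType) (R : realType) K t (lam : 'rV[R]_K) (x y : V) :
  (forall i, 0 <= lam 0 i) -> (t x <= t y)%N -> Phi t lam x <= Phi t lam y.
Proof.
move=> h0 hxy; apply: ler_sum => i _; apply: ler_wpM2l => //.
rewrite ler_nat; case: (i < t x)%N/idP => //= hi.
by rewrite (leq_trans hi hxy).
Qed.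

Lemma Phi_diff (V : finType) (R : realType) K t (lam : 'rV[R]_K) (x y : V) :
  Phi t lam y - Phi t lam x =
  \sum_(i < K) lam 0 i * ((nat_of_bool (i < t y)%N)%:R - (nat_of_bool (i < t x)%N)%:R).
Proof. by rewrite /Phi -sumrB; apply: eq_bigr => i _; rewrite mulrBr. Qed.

Lemma Phi_strict (V : finType) (R : realType) K t (lam : 'rV[R]_K) (x y : V) :
  (forall i, 0 < lam 0 i) -> (t x < t y)%N -> (t y <= K)%N -> Phi t lam x < Phi t lam y.
Proof.
move=> h0 hxy hyK; rewrite -subr_gt0 Phi_diff.
have hxK : (t x < K)%N by apply: leq_trans hyK.
rewrite (bigD1 (Ordinal hxK)) //= hxy ltnn subr0 mulr1.
have : 0 <= \sum_(i < K | i != Ordinal hxK)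
   lam 0 i * ((nat_of_bool (i < t y)%N)%:R - (nat_of_bool (i < t x)%N)%:R).
  apply: sumr_ge0 => i _; apply: mulr_ge0; first exact: ltW.
  rewrite subr_ge0 ler_nat; case: (i < t x)%N/idP => //= hi.
  by rewrite (ltn_trans hi hxy).
have := h0 (Ordinal hxK); lra.
Qed.

Lemma Phi_step (V : finType) (R : realType) K (t : V -> nat) (lam : 'rV[R]_K) (u w : V) (i : 'I_K) :
  t u = i :> nat -> t w = i.+1 -> Phi t lam w - Phi t lam u = lam 0 i.
Proof.
move=> hu hw; rewrite Phi_diff hu hw (bigD1 i) //= ltnSn ltnn subr0 mulr1.
rewrite big1 ?addr0 // => j hj; rewrite ltnS leq_eqVlt.
have -> : (nat_of_ord j == nat_of_ord i) = false by apply/negbTE.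
by rewrite /= subrr mulr0.
Qed.

Lemma tele (R : realType) (f : nat -> R) K a :
  (a <= K)%N -> \sum_(i < K) (f i.+1 - f i) * (nat_of_bool (i < a)%N)%:R = f a - f 0%N.
Proof.
elim: K a => [|K IH] a ha.
  by move: ha; rewrite leqn0 => /eqP ->; rewrite big_ord0 subrr.
rewrite big_ord_recr /=.
move: ha; rewrite leq_eqVlt => /orP [/eqP ->|ha].
  rewrite ltnSn mulr1.
  have -> : \sum_(i < K) (f (widen_ord (leqnSn K) i).+1 - f (widen_ord (leqnSn K) i)) *
         (nat_of_bool (widen_ord (leqnSn K) i < K.+1)%N)%:R =
          \sum_(i < K) (f i.+1 - f i) * (nat_of_bool (i < K)%N)%:R.
    by apply: eq_bigr => i _ /=; rewrite ltn_ord (ltn_trans (ltn_ord i) (ltnSn K)).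
  rewrite IH //; lra.
rewrite ltnS in ha; rewrite ltnNge ha /= mulr0 addr0 -(IH a) //.
Qed.

Unset Implicit Arguments. Set Strict Implicit.

Lemma connect_const (V : finType) m (src tgt : 'I_m -> V) (T : Type) (f : V -> T) :
  (forall e, f (tgt e) = f (src e)) -> forall u w, connect (Defs.adjacent src tgt) u w -> f u = f w.
Proof.
move=> H u w /connectP [p pth ->]; elim: p u pth => //= x p IH u /andP [adj pth].
rewrite -(IH x pth); case/existsP: adj => e /orP [] /andP [/eqP <- /eqP <-]; by rewrite H.
Qed.

Theorem mainTheorem11 (R : realType) (g n : nat) (Vc : 'I_n -> int)
  (V : finType) (m : nat) (gw : V -> nat)
  (src tgt : 'I_m -> V) (leg : 'I_n -> V) :
  stable_graph src tgt leg g gw ->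
  forall tau : rubber_type V m,
  (DR_type_locus src tgt leg Vc tau : set 'rV[R]_m) !=set0 ->
  simplicial_cone (topology_structure.closure (DR_type_locus src tgt leg Vc tau : set 'rV[R]_m)).
Proof.
move=> [hV hconn _ _] tau [p0 [hp0 [F0 [s0 [[hedge0 hvert0] [hlev0 hsl0]]]]]].
have Es0 : s0 = tau.2 by apply: funext.
subst s0.
set t := tau.1 in hlev0 *. set s := tau.2 in hedge0 hvert0 *.
have ord0F u w : (F0 u < F0 w) = (t u < t w)%N by rewrite level_ltP !hlev0.
have eq0F u w : (F0 u == F0 w) = (t u == t w) by rewrite level_eqP !hlev0.
pose K := (\max_(v : V) t v)%N.
have hK v : (t v <= K)%N by apply: (@leq_bigmax V t v).
have [w0 hw0] := @bigop.eq_bigmax V t hV.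
have hex j : (j <= K)%N -> exists u, t u = j.
  move=> hj; have := @level_down V R F0 w0 j; rewrite hlev0 -hw0 => /(_ hj) [u hu].
  by exists u; rewrite -hlev0.
have hzero e : s e = 0 -> t (tgt e) = t (src e).
  move=> h; apply/eqP; rewrite -eq0F -subr_eq0 hedge0 h mul0r //.
pose A := @Amat V R m K src tgt t s.
pose B := @Bmat R m s.
pose M := col_mx A B.
have Mfree : row_free M.
  apply: inj_row_free => v hv.
  rewrite -(hsubmxK v) in hv *.
  set v1 := lsubmx v in hv *; set v2 := rsubmx v in hv *.
  rewrite mul_row_col in hv.
  have hv2 : v2 = 0.
    apply/rowP => r; rewrite [RHS]mxE.
    have he : enum_val r \in Zset s := enum_valP r.
    have he' := he; rewrite inE in he'.
    move/rowP/(_ (enum_val r)): hv; rewrite [X in X = _ -> _]mxE [RHS]mxE Acoord he' Bcoord_in enum_valK_in add0r.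
    by [].
  have hPhi e : Phi t v1 (tgt e) = Phi t v1 (src e).
    case: (s e =P 0) => h; first exact: Phi_eq (hzero e h).
    have hne : e \notin Zset s by rewrite inE; apply/eqP.
    move/rowP/(_ e): hv; rewrite [X in X = _ -> _]mxE [RHS]mxE Acoord Bcoord_out //.
    have -> : (s e == 0) = false by apply/eqP.
    rewrite addr0 => /eqP; rewrite mulf_eq0 invr_eq0 intr_eq0 subr_eq0 => /orP [/eqP //|].
    by move/eqP.
  have hc u w : Phi t v1 u = Phi t v1 w by apply: connect_const hPhi u w (hconn u w).
  have hv1 : v1 = 0.
    apply/rowP => i; rewrite [RHS]mxE.
    have [u hu] := hex i (ltnW (ltn_ord i)).
    have [w hw] := hex i.+1 (ltn_ord i).
    by rewrite -(Phi_step v1 hu hw) (hc w u) subrr.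
  by rewrite hv1 hv2 row_mx0.
have ordPhi (l : 'rV[R]_K) : (forall i, 0 < l 0 i) ->
    forall u w, (Phi t l u < Phi t l w) = (t u < t w)%N.
  move=> hl u w; apply/idP/idP => h; last exact: Phi_strict hl h (hK w).
  rewrite ltnNge; apply/negP => h'.
  by have := Phi_mono (fun i => ltW (hl i)) h'; rewrite leNgt h.
exists (K + #|Zset s|)%N, M; split => //.
apply: cone_closure => //.
- move=> mu hmu.
  rewrite -(hsubmxK mu) mul_row_col.
  set l1 := lsubmx mu; set l2 := rsubmx mu.
  have hl1 i : 0 < l1 0 i by rewrite mxE.
  have hl2 r : 0 < l2 0 r by rewrite mxE.
  have oP := ordPhi l1 hl1.
  split.
    move=> e; rewrite [X in 0 < X]mxE Acoord; case: (s e =P 0) => h.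
      have he : e \in Zset s by rewrite inE h.
      by rewrite Bcoord_in add0r.
    rewrite Bcoord_out ?inE; last by apply/eqP.
    rewrite addr0.
    have hF := hedge0 e; have hpe : 0 < p0 0 e := hp0 e.
    case: (ltgtP 0 ((s e)%:~R : R)) => hs.
    + have : F0 (src e) < F0 (tgt e) by rewrite -subr_gt0 hF mulr_gt0.
      by rewrite ord0F -oP -subr_gt0 => ha; rewrite divr_gt0.
    + have : F0 (tgt e) < F0 (src e).
        have hneg : (s e)%:~R * p0 0 e < 0 by rewrite pmulr_llt0.
        rewrite -subr_gt0; lra.
      rewrite ord0F -oP -subr_gt0 => ha.
      rewrite -mulrNN -invrN divr_gt0 //; [lra|by rewrite oppr_gt0].
    + by move/esym/eqP: hs; rewrite intr_eq0 => /eqP.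
  exists (Phi t l1), s; split; [split|split].
  - move=> e; rewrite [X in _ = _ * X]mxE Acoord; case: (s e =P 0) => h.
      rewrite h mul0r; apply/eqP; rewrite subr_eq0; apply/eqP; exact: Phi_eq (hzero e h).
    rewrite Bcoord_out ?inE; last by apply/eqP.
    by rewrite addr0 mulrC divfK // intr_eq0; apply/eqP.
  - exact: hvert0.
  - by move=> v; rewrite -/t -hlev0; apply: level_equiv => u w; rewrite oP ord0F.
  - by [].
- move=> p [hp [F [sl [[hedge hvert] [hlev hsl]]]]].
  have Es : sl = s by apply: funext.
  subst sl.
  have ordF u w : (F u < F w) = (t u < t w)%N by rewrite level_ltP !hlev.
  have eqF u w : (F u == F w) = (t u == t w) by rewrite level_eqP !hlev.
  pose phi j := if [pick u | t u == j] is Some u then F u else 0.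
  have hphi v : phi (t v) = F v.
    rewrite /phi; case: pickP => [u /eqP hu|/(_ v)]; last by rewrite eqxx.
    by apply/eqP; rewrite eqF hu.
  pose l1 := \row_(i < K) (phi i.+1 - phi i).
  pose l2 := \row_(r < #|Zset s|) p 0 (enum_val r).
  have hP v : Phi t l1 v = phi (t v) - phi 0%N.
    by rewrite /Phi -(tele phi (hK v)); apply: eq_bigr => i _; rewrite mxE.
  exists (row_mx l1 l2); split.
  + move=> i; rewrite mxE; case: splitP => j _; rewrite mxE.
      have [u hu] := hex j (ltnW (ltn_ord j)).
      have [w hw] := hex j.+1 (ltn_ord j).
      by rewrite -hw -hu !hphi subr_ge0 ltW // ordF hu hw.
    exact: ltW (hp _).
  + apply/rowP => e; rewrite mul_row_col [RHS]mxE Acoord; case: (s e =P 0) => h.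
      have he : e \in Zset s by rewrite inE h.
      by rewrite Bcoord_in mxE enum_rankK_in // add0r.
    rewrite Bcoord_out ?inE; last by apply/eqP.
    rewrite addr0 !hP !hphi.
    have -> : F (tgt e) - phi 0%N - (F (src e) - phi 0%N) = (s e)%:~R * p 0 e.
      by rewrite -hedge; lra.
    by rewrite mulrC mulKf // intr_eq0; apply/eqP.
Qed.
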